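(* Let $P_A$ and $P_B$ be convex $M$-polyforms and let $T$ be a DC-tiling of $P_B$ by $P_A$ with tiles $P_1,\dots,P_k$. Put $\Gamma_B=\mathbb{Z}^2\cap P_B$, $\Gamma_i=\mathbb{Z}^2\cap P_i$ and $\partial^T\Gamma_B=\Gamma_B\setminus\bigcup_i\Gamma_i$. Then removing the vertices of $\partial^T\Gamma_B$ splits $\Gamma_B$ into the mutually disconnected parts $\Gamma_1,\dots,\Gamma_k$: for $i\neq j$, no vertex of $\Gamma_i$ is adjacent (in $\mathbb{Z}^2$) to a vertex of $\Gamma_j$.
   Context: Let $M$ be the tiling of $\mathbb{R}^2$ in which each closed unit square $[a,a+1]\times[b,b+1]$, $a,b\in\mathbb{Z}$, is cut by its two diagonals into four isosceles triangles (base $1$, height $\tfrac12$, apex at the square's center). An $M$-polyform is a finite connected set of triangles of $M$, identified with the open interior of their union; it is convex if this open set is convex. Automorphisms of $M$ are the maps $x\mapsto Ax+t$ with $A$ a $2\times2$ signed permutation matrix and $t\in\mathbb{Z}^2$. $P^{DC}$ denotes $P$ with a direction and a color assigned to each of its sides, distinct sides receiving distinct colors. A DC-tiling of $P_B$ by $P_A$ is a tiling of $P_B$ by finitely many images of $P_A^{DC}$ under automorphisms of $M$ (open tiles, pairwise disjoint, closures covering the closure of $P_B$, carrying the transported directions and colors) such that every common edge of two adjacent tiles has the same color and direction in both tiles. *)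

(* Defs.v *)
From Stdlib Require Import Reals ZArith List Relations.
Open Scope R_scope.

Definition pt := (R * R)%type.
Definition pset := pt -> Prop.

Definition padd (x y : pt) : pt := (fst x + fst y, snd x + snd y).
Definition psub (x y : pt) : pt := (fst x - fst y, snd x - snd y).
Definition pscale (l : R) (x : pt) : pt := (l * fst x, l * snd x).
Definition dot (x y : pt) : R := fst x * fst y + snd x * snd y.

Definition seg (p q : pt) : pset :=
  fun x => exists l, 0 <= l <= 1 /\ x = padd (pscale l p) (pscale (1 - l) q).

Definition subset (A B : pset) : Prop := forall x, A x -> B x.

(* topology of R^2 (box neighbourhoods; same topology as Euclidean) *)
Definition near (x y : pt) (e : R) : Prop :=
  Rabs (fst y - fst x) < e /\ Rabs (snd y - snd x) < e.
Definition interior (S : pset) : pset :=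
  fun x => exists e, 0 < e /\ forall y, near x y e -> S y.
Definition closure (S : pset) : pset :=
  fun x => forall e, 0 < e -> exists y, S y /\ near x y e.
Definition boundary (S : pset) : pset := fun x => closure S x /\ ~ S x.

Definition convex (S : pset) : Prop :=
  forall x y l, S x -> S y -> 0 <= l <= 1 ->
    S (padd (pscale l x) (pscale (1 - l) y)).

(* triangle of the unit square [a,a+1]x[b,b+1] adjacent to its
   bottom (S), right (E), top (N) or left (W) side *)
Inductive quarter := QS | QE | QN | QW.
Definition tri := (Z * Z * quarter)%type.

(* vertices in doubled integer coordinates (so the centre is integral) *)
Definition tri_vertsZ (t : tri) : list (Z * Z) :=
  let '(a, b, d) := t in
  let a2 := (2 * a)%Z in let b2 := (2 * b)%Z in
  let c := (a2 + 1, b2 + 1)%Z in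
  match d with
  | QS => (a2, b2) :: (a2 + 2, b2)%Z :: c :: nil
  | QE => (a2 + 2, b2)%Z :: (a2 + 2, b2 + 2)%Z :: c :: nil
  | QN => (a2 + 2, b2 + 2)%Z :: (a2, b2 + 2)%Z :: c :: nil
  | QW => (a2, b2 + 2)%Z :: (a2, b2) :: c :: nil
  end.

Definition ptZ2 (v : Z * Z) : pt := (IZR (fst v) / 2, IZR (snd v) / 2).

Definition closed_tri (t : tri) : pset :=
  fun x => match tri_vertsZ t with
           | v1 :: v2 :: v3 :: nil =>
               exists l1 l2 l3, 0 <= l1 /\ 0 <= l2 /\ 0 <= l3 /\ l1 + l2 + l3 = 1 /\
                 x = padd (pscale l1 (ptZ2 v1))
                       (padd (pscale l2 (ptZ2 v2)) (pscale l3 (ptZ2 v3)))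
           | _ => False
           end.

Definition tri_adj (s t : tri) : Prop :=
  s <> t /\ exists v w, v <> w /\ In v (tri_vertsZ s) /\ In w (tri_vertsZ s)
                                /\ In v (tri_vertsZ t) /\ In w (tri_vertsZ t).

Definition is_polyform (L : list tri) : Prop :=
  L <> nil /\
  forall s t, In s L -> In t L ->
    clos_refl_trans tri (fun u v => In u L /\ In v L /\ tri_adj u v) s t.

Definition pf_set (L : list tri) : pset :=
  interior (fun x => exists t, In t L /\ closed_tri t x).

Definition convex_polyform (L : list tri) : Prop :=
  is_polyform L /\ convex (pf_set L).

(* ---------- automorphisms of M: x |-> A x + t, A signed permutation ---------- *)
Record aut := Aut { a_swap : bool; a_neg1 : bool; a_neg2 : bool; a_t1 : Z; a_t2 : Z }.
Definition sgn (b : bool) : R := if b then -1 else 1.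
Definition aut_map (g : aut) (x : pt) : pt :=
  let u := if a_swap g then snd x else fst x in
  let v := if a_swap g then fst x else snd x in
  (sgn (a_neg1 g) * u + IZR (a_t1 g), sgn (a_neg2 g) * v + IZR (a_t2 g)).

Definition image (f : pt -> pt) (S : pset) : pset :=
  fun y => exists x, S x /\ y = f x.

Definition side (S : pset) (p q : pt) : Prop :=
  p <> q /\ subset (seg p q) (boundary S) /\
  forall p' q', subset (seg p q) (seg p' q') -> subset (seg p' q') (boundary S) ->
    subset (seg p' q') (seg p q).

(* DC-structure on S: D p q means "(p,q) is a side, directed from p to q";
   col p q is its colour; distinct sides get distinct colours *)
Definition dc_struct (C : Type) (S : pset) (D : pt -> pt -> Prop)
    (col : pt -> pt -> C) : Prop :=
  (forall p q, D p q -> side S p q) /\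
  (forall p q, side S p q -> D p q \/ D q p) /\
  (forall p q, D p q -> ~ D q p) /\
  (forall p q p' q', D p q -> D p' q' -> col p q = col p' q' -> p = p' /\ q = q').

Definition tile (SA : pset) (g : nat -> aut) (i : nat) : pset :=
  image (aut_map (g i)) SA.

Definition dc_tiling (C : Type) (SA SB : pset) (D : pt -> pt -> Prop)
    (col : pt -> pt -> C) (k : nat) (g : nat -> aut) : Prop :=
  (forall i j, (i < k)%nat -> (j < k)%nat -> i <> j ->
     forall x, ~ (tile SA g i x /\ tile SA g j x)) /\
  (forall x, closure SB x <-> exists i, (i < k)%nat /\ closure (tile SA g i) x) /\
  (* common edges carry the same (transported) colour and direction *)
  (forall i j, (i < k)%nat -> (j < k)%nat -> i <> j ->
     forall p q p' q', D p q -> D p' q' ->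
     forall x y, x <> y ->
       subset (seg x y) (seg (aut_map (g i) p) (aut_map (g i) q)) ->
       subset (seg x y) (seg (aut_map (g j) p') (aut_map (g j) q')) ->
       col p q = col p' q' /\
       0 < dot (psub (aut_map (g i) q) (aut_map (g i) p))
               (psub (aut_map (g j) q') (aut_map (g j) p'))).

Definition lat (a b : Z) : pt := (IZR a, IZR b).

(* Main.v *)
Require Import Defs.
From Stdlib Require Import Reals ZArith List Lra Lia.
Open Scope R_scope.

Definition inTri (a b : Z) (q : quarter) (z : pt) : Prop :=
  let u := fst z - IZR a in let v := snd z - IZR b in
  match q with
  | QS => 0 <= v /\ v <= u /\ u + v <= 1
  | QE => u <= 1 /\ v <= u /\ 1 <= u + v
  | QN => v <= 1 /\ u <= v /\ 1 <= u + v
  | QW => 0 <= u /\ u <= v /\ u + v <= 1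
  end.

Ltac unf := unfold closed_tri, inTri, padd, pscale, ptZ2;
  cbv beta iota zeta delta [tri_vertsZ]; cbn [fst snd];
  rewrite ?plus_IZR, ?mult_IZR.

Lemma closed_tri_inTri a b q z : closed_tri (a,b,q) z -> inTri a b q z.
Proof.
  destruct q; unf;
  intros (l1 & l2 & l3 & H1 & H2 & H3 & H4 & ->); cbn [fst snd];
  (assert (l1 = 1 - l2 - l3) by lra; subst l1; lra).
Qed.

Lemma inTri_closed_tri a b q z : inTri a b q z -> closed_tri (a,b,q) z.
Proof.
  destruct z as [X Y].
  destruct q; unf; cbn [fst snd]; intros H.
  - exists (1 - (X - IZR a) - (Y - IZR b)), ((X - IZR a) - (Y - IZR b)), (2*(Y - IZR b)).
    repeat split; try lra; f_equal; cbn [fst snd]; lra.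
  - exists ((X - IZR a) - (Y - IZR b)), ((X - IZR a) + (Y - IZR b) - 1), (2*(1 - (X - IZR a))).
    repeat split; try lra; f_equal; cbn [fst snd]; lra.
  - exists ((X - IZR a) + (Y - IZR b) - 1), ((Y - IZR b) - (X - IZR a)), (2*(1 - (Y - IZR b))).
    repeat split; try lra; f_equal; cbn [fst snd]; lra.
  - exists ((Y - IZR b) - (X - IZR a)), (1 - (X - IZR a) - (Y - IZR b)), (2*(X - IZR a)).
    repeat split; try lra; f_equal; cbn [fst snd]; lra.
Qed.
Definition inTriS (a b : Z) (q : quarter) (z : pt) : Prop :=
  let u := fst z - IZR a in let v := snd z - IZR b in
  match q with
  | QS => 0 < v /\ v < u /\ u + v < 1
  | QE => u < 1 /\ v < u /\ 1 < u + v
  | QN => v < 1 /\ u < v /\ 1 < u + v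
  | QW => 0 < u /\ u < v /\ u + v < 1
  end.

Lemma z_eq (a i : Z) (X : R) : IZR i < X < IZR i + 1 -> IZR a <= X <= IZR a + 1 -> a = i.
Proof.
  intros H1 H2.
  assert (IZR a < IZR (i + 1)) by (rewrite plus_IZR; lra).
  assert (IZR i < IZR (a + 1)) by (rewrite plus_IZR; lra).
  apply lt_IZR in H; apply lt_IZR in H0; lia.
Qed.

Lemma inTri_sq a b q z : inTri a b q z ->
  IZR a <= fst z <= IZR a + 1 /\ IZR b <= snd z <= IZR b + 1.
Proof. destruct q; simpl; lra. Qed.

Lemma inTriS_sq a b q z : inTriS a b q z ->
  IZR a < fst z < IZR a + 1 /\ IZR b < snd z < IZR b + 1.
Proof. destruct q; simpl; lra. Qed.

Lemma ident a b q a0 b0 q0 z : inTri a b q z -> inTriS a0 b0 q0 z -> (a,b,q) = (a0,b0,q0).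
Proof.
  intros H H0.
  destruct (inTri_sq _ _ _ _ H) as [Ha Hb].
  destruct (inTriS_sq _ _ _ _ H0) as [Ha0 Hb0].
  assert (a = a0) by (eapply z_eq; eauto). assert (b = b0) by (eapply z_eq; eauto).
  subst. destruct q, q0; simpl in *; try reflexivity; lra.
Qed.
Inductive dir := D1 | D2 | D3 | D4 | D5 | D6 | D7 | D8.
Definition offx (d : dir) : R := match d with
 | D1 | D2 => 1/2 | D3 | D4 => -1/2 | D5 | D7 => 1/8 | D6 | D8 => -1/8 end.
Definition offy (d : dir) : R := match d with
 | D1 | D3 => 1/8 | D2 | D4 => -1/8 | D5 | D6 => 1/2 | D7 | D8 => -1/2 end.
Definition ta (i : Z) (d : dir) : Z := match d with
 | D1 | D2 | D5 | D7 => i | _ => (i - 1)%Z end.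
Definition tb (j : Z) (d : dir) : Z := match d with
 | D1 | D3 | D5 | D6 => j | _ => (j - 1)%Z end.
Definition tq (d : dir) : quarter := match d with
 | D1 | D3 => QS | D2 | D4 => QN | D5 | D7 => QW | D6 | D8 => QE end.

Lemma probe_strict i j d t : 0 < t <= 1 ->
  inTriS (ta i d) (tb j d) (tq d) (IZR i + t * offx d, IZR j + t * offy d).
Proof. intros; destruct d; simpl; rewrite ?minus_IZR; lra. Qed.

Lemma box_strict i j d y : near (IZR i + offx d, IZR j + offy d) y (1/16) ->
  inTriS (ta i d) (tb j d) (tq d) y.
Proof.
  unfold near; intros [H1 H2]; apply Rabs_def2 in H1; apply Rabs_def2 in H2.
  destruct d; simpl in *; rewrite ?minus_IZR; lra.
Qed.

Definition U (L : list tri) : pset := fun x => exists t, In t L /\ closed_tri t x.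

Lemma near_refl x e : 0 < e -> near x x e.
Proof. intros; unfold near; split; apply Rabs_def1; lra. Qed.

Lemma pf_U L x : pf_set L x -> U L x.
Proof. intros [e [He H]]. apply H, near_refl, He. Qed.

Lemma U_strict L a b q y : U L y -> inTriS a b q y -> In (a,b,q) L.
Proof.
  intros [[[a' b'] q'] [Hin Hc]] Hs.
  apply closed_tri_inTri in Hc.
  rewrite <- (ident _ _ _ _ _ _ _ Hc Hs); auto.
Qed.

Lemma lemA L i j d : pf_set L (lat i j) -> In (ta i d, tb j d, tq d) L.
Proof.
  intros [e [He H]].
  set (t := Rmin e 1).
  assert (0 < t) by (apply Rmin_pos; lra).
  assert (t <= e) by apply Rmin_l.
  assert (t <= 1) by apply Rmin_r.
  apply (U_strict L _ _ _ (IZR i + t * offx d, IZR j + t * offy d)).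
  - apply H. unfold near, lat; simpl; split; apply Rabs_def1; destruct d; simpl; lra.
  - apply probe_strict; lra.
Qed.

Lemma lemA' L i j d : pf_set L (lat i j) -> pf_set L (IZR i + offx d, IZR j + offy d).
Proof.
  intros H. pose proof (lemA L i j d H) as Hin.
  exists (1/16); split; [lra|]. intros y Hy.
  exists (ta i d, tb j d, tq d); split; auto.
  apply inTri_closed_tri.
  pose proof (box_strict i j d y Hy). destruct (tq d); simpl in *; lra.
Qed.

Lemma diamond L i j : (forall d, In (ta i d, tb j d, tq d) L) -> pf_set L (lat i j).
Proof.
  intros HL. exists (1/2); split; [lra|]. intros y [H1 H2].
  apply Rabs_def2 in H1; apply Rabs_def2 in H2. unfold lat in *; simpl in *.
  destruct (Rle_dec (fst y - IZR i) 0), (Rle_dec (snd y - IZR j) 0),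
    (Rle_dec (snd y - IZR j) (fst y - IZR i)), (Rle_dec (fst y - IZR i + (snd y - IZR j)) 0);
  first [ exists (ta i D1, tb j D1, tq D1); split; [apply HL|apply inTri_closed_tri; simpl; rewrite ?minus_IZR; lra]
        | exists (ta i D2, tb j D2, tq D2); split; [apply HL|apply inTri_closed_tri; simpl; rewrite ?minus_IZR; lra]
        | exists (ta i D3, tb j D3, tq D3); split; [apply HL|apply inTri_closed_tri; simpl; rewrite ?minus_IZR; lra]
        | exists (ta i D4, tb j D4, tq D4); split; [apply HL|apply inTri_closed_tri; simpl; rewrite ?minus_IZR; lra]
        | exists (ta i D5, tb j D5, tq D5); split; [apply HL|apply inTri_closed_tri; simpl; rewrite ?minus_IZR; lra]
        | exists (ta i D6, tb j D6, tq D6); split; [apply HL|apply inTri_closed_tri; simpl; rewrite ?minus_IZR; lra]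
        | exists (ta i D7, tb j D7, tq D7); split; [apply HL|apply inTri_closed_tri; simpl; rewrite ?minus_IZR; lra]
        | exists (ta i D8, tb j D8, tq D8); split; [apply HL|apply inTri_closed_tri; simpl; rewrite ?minus_IZR; lra] ].
Qed.
Definition lin (g : aut) (w : pt) : pt :=
  (sgn (a_neg1 g) * (if a_swap g then snd w else fst w),
   sgn (a_neg2 g) * (if a_swap g then fst w else snd w)).

Lemma aut_add g x1 x2 w1 w2 :
  aut_map g (x1 + w1, x2 + w2) =
  (fst (aut_map g (x1, x2)) + fst (lin g (w1, w2)), snd (aut_map g (x1, x2)) + snd (lin g (w1, w2))).
Proof. destruct g as [[] [] [] t1 t2]; unfold aut_map, lin, sgn; simpl; f_equal; ring. Qed.

Ltac fin2 a t1 b t2 :=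
  first [ (exists (a - t1)%Z; f_equal; rewrite minus_IZR; lra)
        | (exists (t1 - a)%Z; f_equal; rewrite minus_IZR; lra)
        | (exists (b - t2)%Z; f_equal; rewrite minus_IZR; lra)
        | (exists (t2 - b)%Z; f_equal; rewrite minus_IZR; lra) ].
Ltac fin1 a t1 b t2 :=
  first [ (exists (a - t1)%Z; fin2 a t1 b t2)
        | (exists (t1 - a)%Z; fin2 a t1 b t2)
        | (exists (b - t2)%Z; fin2 a t1 b t2)
        | (exists (t2 - b)%Z; fin2 a t1 b t2) ].

Lemma aut_lat g x a b : lat a b = aut_map g x -> exists i j, x = lat i j.
Proof.
  destruct g as [sw n1 n2 t1 t2]; destruct x as [x1 x2]; unfold lat, aut_map, sgn;
  destruct sw, n1, n2; simpl; intros H; injection H; intros E2 E1; fin1 a t1 b t2.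
Qed.
Ltac trydir := first [ exists D1; simpl; f_equal; lra | exists D2; simpl; f_equal; lra
 | exists D3; simpl; f_equal; lra | exists D4; simpl; f_equal; lra
 | exists D5; simpl; f_equal; lra | exists D6; simpl; f_equal; lra
 | exists D7; simpl; f_equal; lra | exists D8; simpl; f_equal; lra ].

Lemma lin_dir g d : exists d', lin g (offx d', offy d') = (offx d, offy d).
Proof.
  destruct g as [[] [] [] t1 t2]; destruct d; unfold lin, sgn; simpl; trydir.
Qed.

Lemma tile_dir SA g a b d :
  (forall i j d, SA (lat i j) -> SA (IZR i + offx d, IZR j + offy d)) ->
  image (aut_map g) SA (lat a b) -> image (aut_map g) SA (IZR a + offx d, IZR b + offy d).
Proof.
  intros HSA [x [Hx E]].
  destruct (aut_lat _ _ _ _ E) as [i [j ->]].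
  destruct (lin_dir g d) as [d' Hd'].
  exists (IZR i + offx d', IZR j + offy d'). split; auto.
  rewrite aut_add, Hd'. unfold lat in E; rewrite <- E. reflexivity.
Qed.

Theorem corollary3 (LA LB : list tri) (C : Type) (D : pt -> pt -> Prop)
    (col : pt -> pt -> C) (k : nat) (g : nat -> aut) :
  convex_polyform LA -> convex_polyform LB ->
  dc_struct C (pf_set LA) D col ->
  dc_tiling C (pf_set LA) (pf_set LB) D col k g ->
  (* Gamma_i is contained in Gamma_B *)
  (forall i, (i < k)%nat -> forall a b : Z,
      tile (pf_set LA) g i (lat a b) -> pf_set LB (lat a b)) /\
  (* no vertex of Gamma_i is Z^2-adjacent to a vertex of Gamma_j, i <> j *)
  (forall i j, (i < k)%nat -> (j < k)%nat -> i <> j ->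
     forall a b c d : Z,
       tile (pf_set LA) g i (lat a b) -> tile (pf_set LA) g j (lat c d) ->
       (Z.abs (a - c) + Z.abs (b - d) <> 1)%Z).
Proof.
  intros _ _ _ [Hdisj [Hcov _]].
  assert (HSA : forall i j d, pf_set LA (lat i j) -> pf_set LA (IZR i + offx d, IZR j + offy d))
    by (intros; apply lemA'; auto).
  split.
  - intros i Hi a b Ht. apply diamond. intros dd.
    pose proof (tile_dir _ _ a b dd HSA Ht) as Ht'.
    assert (Hc : closure (pf_set LB) (IZR a + offx dd, IZR b + offy dd)).
    { apply Hcov. exists i; split; auto. intros e He. exists (IZR a + offx dd, IZR b + offy dd).
      split; auto. apply near_refl; auto. }
    destruct (Hc (1/16)) as [y [Hy Hn]]; [lra|].
    apply (U_strict LB _ _ _ y). apply pf_U; auto. apply box_strict; auto.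
  - intros i j Hi Hj Hij a b c d Hta Htc Habs.
    assert (Hcase : ((c = a + 1 /\ d = b) \/ (c = a - 1 /\ d = b) \/
                     (c = a /\ d = b + 1) \/ (c = a /\ d = b - 1))%Z) by lia.
    destruct Hcase as [[-> ->]|[[-> ->]|[[-> ->]|[-> ->]]]].
    + apply (Hdisj i j Hi Hj Hij (IZR a + offx D1, IZR b + offy D1)); split.
      * apply tile_dir; auto.
      * replace (IZR a + offx D1, IZR b + offy D1) with (IZR (a+1) + offx D3, IZR b + offy D3).
        apply tile_dir; auto. rewrite plus_IZR; simpl; f_equal; lra.
    + apply (Hdisj i j Hi Hj Hij (IZR a + offx D3, IZR b + offy D3)); split.
      * apply tile_dir; auto.
      * replace (IZR a + offx D3, IZR b + offy D3) with (IZR (a-1) + offx D1, IZR b + offy D1).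
        apply tile_dir; auto. rewrite minus_IZR; simpl; f_equal; lra.
    + apply (Hdisj i j Hi Hj Hij (IZR a + offx D5, IZR b + offy D5)); split.
      * apply tile_dir; auto.
      * replace (IZR a + offx D5, IZR b + offy D5) with (IZR a + offx D7, IZR (b+1) + offy D7).
        apply tile_dir; auto. rewrite plus_IZR; simpl; f_equal; lra.
    + apply (Hdisj i j Hi Hj Hij (IZR a + offx D7, IZR b + offy D7)); split.
      * apply tile_dir; auto.
      * replace (IZR a + offx D7, IZR b + offy D7) with (IZR a + offx D5, IZR (b-1) + offy D5).
        apply tile_dir; auto. rewrite minus_IZR; simpl; f_equal; lra.
Qed.
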